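(* Let $x=(\xi,r)\in X^{(n)}$ and $y=(\eta,t)\in X^{(n)}\cap(B^{\mathbb{T}_n}_r(\xi)\times(0,r))$. If $m\ge1$ is such that the chemical distance between $x$ and $y$ in $G^\prime(X^{(n)})$ is larger than $m$, then there exists a toroidal descending chain of points of $X^{(n)}$ starting from $x$ and consisting of more than $m$ points.
   Context: Fix an integer $d\ge2$ and $n\ge1$. $\mathbb{T}_n$ is the torus obtained from $[-n/2,n/2]^d$ by identifying opposite faces, with toroidal distance ${\rm d}_{\mathbb{T}_n}$ and $B^{\mathbb{T}_n}_r(\xi)=\{\eta\in\mathbb{T}_n:{\rm d}_{\mathbb{T}_n}(\xi,\eta)\le r\}$. $X^{(n)}$ is a (realization of a) finite set of points $(\xi,r)\in\mathbb{T}_n\times[0,\infty)$ (in the paper, a Poisson point process of intensity $1$ on $\mathbb{T}_n$ with i.i.d. absolutely continuous marks). $G^\prime(X^{(n)})$ has vertex set $X^{(n)}$ and a directed edge from $(\xi,r)$ to $(\eta,t)$ iff $(\eta,t)\in B^{\mathbb{T}_n}_r(\xi)\times[0,r)$ and there is no $(\zeta,w)\in X^{(n)}\cap(B^{\mathbb{T}_n}_r(\xi)\times(t,r))$ with $\eta\in B^{\mathbb{T}_n}_w(\zeta)$; chemical distance is the minimal number of edges of a path, edges traversable in either direction. Points $x_1=(\xi_1,r_1),\dots,x_m=(\xi_m,r_m)$ form a toroidal descending chain if $r_1>r_2>\dots>r_m$ and $\xi_{i+1}\in B^{\mathbb{T}_n}_{r_i}(\xi_i)$ for all $i\in\{1,\dots,m-1\}$.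 *)

(* Defs.v *)
From HB Require Import structures.
From mathcomp Require Import all_boot all_order all_algebra.
From mathcomp Require Import reals.
Set Implicit Arguments. Unset Strict Implicit. Unset Printing Implicit Defensive.
Import Order.TTheory GRing.Theory Num.Theory.
Local Open Scope ring_scope.

Section Defs.
Variables (R : realType) (d : nat).

(* A marked point (xi, r) in T_n x [0,oo): xi is represented by its
   coordinates in the fundamental domain, r is the mark. *)
Definition mpt := ('rV[R]_d * R)%type.

Definition in_fund (n : nat) (xi : 'rV[R]_d) : Prop :=
  forall i : 'I_d, - (n%:R / 2) <= xi ord0 i /\ xi ord0 i < n%:R / 2.

Definition shift_dist (n : nat) (xi eta : 'rV[R]_d) (k : 'I_d -> int) : R :=
  Num.sqrt (\sum_(i < d) (xi ord0 i - eta ord0 i - n%:R * (k i)%:~R) ^+ 2).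

(* eta \in B^{T_n}_r(xi), i.e. d_{T_n}(xi, eta) <= r, where the toroidal
   distance is the quotient distance min_{k in Z^d} |xi - eta - n k|
   (the minimum is attained). *)
Definition in_tball (n : nat) (xi : 'rV[R]_d) (r : R) (eta : 'rV[R]_d) : Prop :=
  exists k : 'I_d -> int, shift_dist n xi eta k <= r.

Definition gedge (n : nat) (X : seq mpt) (x y : mpt) : Prop :=
  [/\ x \in X /\ y \in X,
      in_tball n x.1 x.2 y.1, 0 <= y.2, y.2 < x.2 &
      ~ (exists2 z, z \in X &
           [/\ in_tball n x.1 x.2 z.1, y.2 < z.2, z.2 < x.2 &
               in_tball n z.1 z.2 y.1])].

Fixpoint upath (n : nat) (X : seq mpt) (x : mpt) (p : seq mpt) (y : mpt) : Prop :=
  match p with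
  | [::] => x = y
  | z :: p' => (gedge n X x z \/ gedge n X z x) /\ upath n X z p' y
  end.

Definition chem_dist_gt (n : nat) (X : seq mpt) (x y : mpt) (m : nat) : Prop :=
  ~ (exists p : seq mpt, (size p <= m)%N /\ upath n X x p y).

Fixpoint tdesc_chain (n : nat) (x : mpt) (c : seq mpt) : Prop :=
  match c with
  | [::] => True
  | z :: c' => [/\ z.2 < x.2, in_tball n x.1 x.2 z.1 & tdesc_chain n z c']
  end.

End Defs.

(* Main.v *)
Require Import Defs.
From HB Require Import structures.
From mathcomp Require Import all_boot all_order all_algebra.
From mathcomp Require Import reals.
From Stdlib Require Import Classical.
Import Order.TTheory GRing.Theory Num.Theory.
Local Open Scope ring_scope.

Section Aux.
Variables (R : realType) (d n : nat) (X : seq (mpt R d)).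

Fixpoint fpath (a : mpt R d) (p : seq (mpt R d)) (b : mpt R d) : Prop :=
  match p with
  | [::] => a = b
  | z :: p' => gedge n X a z /\ fpath z p' b
  end.

Lemma fpath_cat a p q z b : fpath a p z -> fpath z q b -> fpath a (p ++ q) b.
Proof.
elim: p a => [|w p IH] a /=; first by move=> ->.
by move=> [H1 H2] H3; split=> //; apply: IH H2 H3.
Qed.

Lemma fpath_upath a p b : fpath a p b -> upath n X a p b.
Proof. by elim: p a => [|w p IH] a //= [H1 H2]; split; [left|apply: IH]. Qed.

Lemma fpath_chain a p b : fpath a p b ->
  all (fun z => z \in X) p /\ tdesc_chain n a p.
Proof.
elim: p a => [|w p IH] a //= [[[_ Hw] Hb _ Hlt _] H2].
have [? ?] := IH _ H2; by rewrite Hw; split=> //; split.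
Qed.

Lemma count_lt (P Q : pred (mpt R d)) (s : seq (mpt R d)) z :
  (forall w, P w -> Q w) -> z \in s -> ~~ P z -> Q z ->
  (count P s < count Q s)%N.
Proof.
move=> PQ; elim: s => [|w s IH] //=.
rewrite in_cons => /orP [/eqP <-|Hz] nP Qz.
  rewrite (negbTE nP) Qz add0n add1n ltnS.
  by apply: sub_count.
have := IH Hz nP Qz.
case: (boolP (P w)) => Pw; first by rewrite (PQ _ Pw) !add1n ltnS.
case: (Q w); rewrite ?add1n ?add0n => H //; exact: ltnW.
Qed.

Definition cnt (a b : mpt R d) := count (fun w : mpt R d => (b.2 < w.2) && (w.2 < a.2)) X.

Lemma main_ind k : forall a b, a \in X -> b \in X -> in_tball n a.1 a.2 b.1 ->
  0 <= b.2 -> b.2 < a.2 -> (cnt a b < k)%N -> exists p, fpath a p b.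
Proof.
elim: k => [|k IH] a b Ha Hb Hab H0 Hlt Hc //.
case: (classic (gedge n X a b)) => He.
  by exists [:: b]; split.
have [z Hz [Haz Hbz Hza Hzb]] :
  exists2 z, z \in X &
    [/\ in_tball n a.1 a.2 z.1, b.2 < z.2, z.2 < a.2 & in_tball n z.1 z.2 b.1].
  apply: NNPP => Hn; apply: He; split=> //.
have Hz0 : 0 <= z.2 by apply: le_trans (ltW Hbz).
have [p1 Hp1] : exists p, fpath a p z.
  apply: (IH a z) => //.
  rewrite -ltnS; apply: leq_trans Hc; rewrite ltnS.
  apply: (@count_lt _ _ _ z) => //=.
  - move=> w /andP [h1 h2]; rewrite h2 andbT; exact: lt_trans Hbz h1.
  - by rewrite ltxx.
  - by rewrite Hbz Hza.
have [p2 Hp2] : exists p, fpath z p b.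
  apply: (IH z b) => //.
  rewrite -ltnS; apply: leq_trans Hc; rewrite ltnS.
  apply: (@count_lt _ _ _ z) => //=.
  - move=> w /andP [h1 h2]; rewrite h1 /=; exact: lt_trans h2 Hza.
  - by rewrite ltxx andbF.
  - by rewrite Hbz Hza.
by exists (p1 ++ p2); apply: fpath_cat Hp1 Hp2.
Qed.

End Aux.

Theorem lemma5p2 (R : realType) (d n : nat) (X : seq (mpt R d))
    (x y : mpt R d) (m : nat) :
  (2 <= d)%N -> (1 <= n)%N ->
  (forall z, z \in X -> in_fund n z.1 /\ 0 <= z.2) ->
  x \in X -> y \in X ->
  in_tball n x.1 x.2 y.1 -> 0 < y.2 -> y.2 < x.2 ->
  (1 <= m)%N ->
  chem_dist_gt n X x y m ->
  exists c : seq (mpt R d),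
    [/\ all (fun z => z \in X) c, tdesc_chain n x c & (m < size (x :: c))%N].
Proof.
move=> _ _ _ Hx Hy Hxy Hy0 Hlt _ Hch.
have [p Hp] := @main_ind R d n X (cnt R d X x y).+1 x y Hx Hy Hxy (ltW Hy0) Hlt (ltnSn _).
have [Hall Hc] := fpath_chain _ _ _ _ _ _ _ Hp.
exists p; split=> //=.
case: (leqP (size p) m) => H; last by apply: ltnW.
by exfalso; apply: Hch; exists p; split=> //; apply: fpath_upath.
Qed.
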